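(* Let $\chi_3(n)=\left(\frac{n}{3}\right)$ be the Legendre symbol modulo $3$ and let $\tilde\chi_3$ be either of its two modified characters (i.e. $\tilde\chi_3(3)=+1$ or $\tilde\chi_3(3)=-1$). Then for every integer $k\ge1$ and every $n\in\mathbb{N}\cup\{0\}$, $$\#\{1\le m\le k:\ \tilde\chi_3(n+m)=-1\}\ \ge\ \frac12\Big(k-\Big\lfloor\frac{\log k}{\log 3}\Big\rfloor-2\Big).$$ Consequently $\delta(k)\ge \tfrac12 k+O(\log k)$.
   Context: For a real Dirichlet character $\chi_q$ modulo $q>1$, a modified character $\tilde\chi_q$ is the completely multiplicative function $\mathbb{N}\to\{+1,-1\}$ with $\tilde\chi_q(p)=\chi_q(p)$ for primes $p\nmid q$ and $\tilde\chi_q(p)=\eta(p)\in\{+1,-1\}$ (an arbitrary sign) for primes $p\mid q$. Here $\delta(k)$ denotes the supremum, over all $q>1$, all real characters $\chi_q$ mod $q$ and all sign choices $\eta$, of $\min_{n\ge0}\#\{1\le m\le k:\tilde\chi_q(n+m)=-1\}$. *)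

(* Defs.v *)
From Stdlib Require Import Reals Lra Lia ZArith Arith List Znumtheory.
From Coquelicot Require Import Coquelicot.
Open Scope R_scope.

Definition chi3 (n : nat) : Z :=
  match (n mod 3)%nat with
  | 0%nat => 0%Z
  | 1%nat => 1%Z
  | _ => (-1)%Z
  end.

Definition is_real_char (q : nat) (chi : nat -> Z) : Prop :=
  chi 1%nat = 1%Z /\
  (forall m n : nat, chi (m * n)%nat = (chi m * chi n)%Z) /\
  (forall n : nat, chi (n + q)%nat = chi n) /\
  (forall n : nat, chi n = 0%Z \/ chi n = 1%Z \/ chi n = (-1)%Z) /\
  (forall n : nat, chi n = 0%Z <-> Nat.gcd n q <> 1%nat).

(* f is the modified character tilde chi_q attached to chi mod q and the
   sign choice eta (eta p in {+1,-1} for primes p | q): f is a completely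
   multiplicative function on the positive integers with values in
   {+1,-1}, f p = chi p for primes p not dividing q, f p = eta p for
   primes p dividing q.  (The value f 0 is irrelevant.) *)
Definition is_modified_char (q : nat) (chi : nat -> Z) (eta : nat -> Z)
    (f : nat -> Z) : Prop :=
  (forall p : nat, prime (Z.of_nat p) -> Nat.divide p q ->
      eta p = 1%Z \/ eta p = (-1)%Z) /\
  (forall n : nat, (0 < n)%nat -> f n = 1%Z \/ f n = (-1)%Z) /\
  (forall m n : nat, (0 < m)%nat -> (0 < n)%nat -> f (m * n)%nat = (f m * f n)%Z) /\
  (forall p : nat, prime (Z.of_nat p) -> ~ Nat.divide p q -> f p = chi p) /\
  (forall p : nat, prime (Z.of_nat p) -> Nat.divide p q -> f p = eta p).

Definition negcount (f : nat -> Z) (k n : nat) : nat :=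
  length (filter (fun m => Z.eqb (f (n + m)%nat) (-1)%Z) (seq 1 k)).

Definition minneg (f : nat -> Z) (k : nat) : Rbar :=
  Glb_Rbar (fun y => exists n : nat, y = INR (negcount f k n)).

Definition delta (k : nat) : Rbar :=
  Lub_Rbar (fun x => exists (q : nat) (chi eta f : nat -> Z),
    (1 < q)%nat /\ is_real_char q chi /\ is_modified_char q chi eta f /\
    Finite x = minneg f k).

(* Main.v *)
Require Import Defs.
From Stdlib Require Import Reals ZArith Arith List Znumtheory Lia Lra.
From Coquelicot Require Import Coquelicot.
Open Scope R_scope.

Ltac dv x := pose proof (Nat.div_mod_eq x 3); pose proof (Nat.mod_upper_bound x 3 ltac:(lia)).

Lemma chi3_mul : forall a b, chi3 (a*b) = (chi3 a * chi3 b)%Z.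
Proof.
  intros a b. unfold chi3. rewrite Nat.mul_mod by lia.
  pose proof (Nat.mod_upper_bound a 3 ltac:(lia)).
  pose proof (Nat.mod_upper_bound b 3 ltac:(lia)).
  destruct (a mod 3)%nat as [|[|[|]]]; destruct (b mod 3)%nat as [|[|[|]]];
    simpl; try reflexivity; lia.
Qed.

Lemma chi3_vals : forall n, (n mod 3 <> 0)%nat -> chi3 n = 1%Z \/ chi3 n = (-1)%Z.
Proof.
  intros n H. unfold chi3. destruct (n mod 3)%nat as [|[|]]; auto; lia.
Qed.

Lemma chi3_zero : forall n, (n mod 3 = 0)%nat -> chi3 n = 0%Z.
Proof. intros n H. unfold chi3. rewrite H. reflexivity. Qed.

Fixpoint sumf (f : nat -> Z) (a L : nat) : Z :=
  match L with O => 0%Z | S L' => (f a + sumf f (S a) L')%Z end.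

Lemma sumf_snoc : forall f L a, sumf f a (S L) = (sumf f a L + f (a+L)%nat)%Z.
Proof.
  intros f L. induction L; intros a; simpl.
  - rewrite Nat.add_0_r. lia.
  - simpl in IHL. rewrite IHL. replace (S a + L)%nat with (a + S L)%nat by lia. lia.
Qed.

Definition P3 (x : nat) : Z := if (x mod 3 =? 2)%nat then 1%Z else 0%Z.

Lemma sumf_chi3 : forall L a, sumf chi3 a L = (P3 (a+L) - P3 a)%Z.
Proof.
  induction L; intros a; simpl.
  - rewrite Nat.add_0_r. lia.
  - rewrite IHL. replace (S a + L)%nat with (a + S L)%nat by lia.
    assert (chi3 a = P3 (S a) - P3 a)%Z.
    { unfold chi3, P3. dv a. dv (S a).
      destruct (a mod 3)%nat as [|[|[|]]] eqn:E1; try lia;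
      destruct (S a mod 3)%nat as [|[|[|]]] eqn:E2; simpl; try lia. }
    lia.
Qed.

Lemma sumf_chi3_bound : forall L a, (- 1 <= sumf chi3 a L <= 1)%Z.
Proof.
  intros. rewrite sumf_chi3. unfold P3.
  destruct (_ =? _)%nat; destruct (_ =? _)%nat; lia.
Qed.

Section Main.
Variable f : nat -> Z.
Variable eta : Z.
Hypothesis Heta : eta = 1%Z \/ eta = (-1)%Z.
Hypothesis H1 : forall m, (1 <= m)%nat -> (m mod 3 <> 0)%nat -> f m = chi3 m.
Hypothesis H3 : forall j, (1 <= j)%nat -> f (3*j)%nat = (eta * f j)%Z.
Hypothesis Hv : forall m, (1 <= m)%nat -> f m = 1%Z \/ f m = (-1)%Z.

Lemma decomp : forall L a, (1 <= a)%nat ->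
  sumf f a L = (sumf chi3 a L + eta * sumf f ((a+2)/3) ((a+L+2)/3 - (a+2)/3))%Z.
Proof.
  induction L; intros a Ha.
  - simpl. rewrite Nat.add_0_r, Nat.sub_diag. simpl. lia.
  - rewrite !sumf_snoc, IHL by lia.
    destruct (Nat.eq_dec ((a+L) mod 3) 0) as [E|E].
    + dv (a+L)%nat; dv (a+S L+2)%nat; dv (a+L+2)%nat; dv (a+2)%nat.
      replace ((a + S L + 2) / 3 - (a + 2) / 3)%nat with (S ((a + L + 2) / 3 - (a + 2) / 3)) by lia.
      rewrite sumf_snoc.
      replace ((a + 2) / 3 + ((a + L + 2) / 3 - (a + 2) / 3))%nat with ((a+L)/3)%nat by lia.
      rewrite chi3_zero by auto.
      assert (f (a+L)%nat = (eta * f ((a+L)/3)%nat)%Z) as Hf.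
      { replace (a+L)%nat with (3 * ((a+L)/3))%nat at 1 by lia. apply H3. lia. }
      rewrite Hf. lia.
    + dv (a+L)%nat; dv (a+S L+2)%nat; dv (a+L+2)%nat.
      replace ((a + S L + 2) / 3)%nat with ((a + L + 2) / 3)%nat by lia.
      rewrite H1 by lia. lia.
Qed.

Lemma bound3 : forall b L a, (1 <= a)%nat -> (L <= 3^b)%nat ->
  (Z.abs (sumf f a L) <= Z.of_nat b + 1)%Z.
Proof.
  induction b; intros L a Ha HL.
  - simpl in HL. destruct L as [|[|]]; simpl; try lia.
    destruct (Hv a Ha) as [E|E]; rewrite E; simpl; lia.
  - rewrite decomp by auto.
    pose proof (sumf_chi3_bound L a).
    assert (1 <= (a+2)/3)%nat by (dv (a+2)%nat; lia).
    assert (((a + L + 2) / 3 - (a + 2) / 3) <= 3^b)%nat.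
    { rewrite Nat.pow_succ_r' in HL. dv (a+2)%nat; dv (a+L+2)%nat. lia. }
    specialize (IHb _ _ H0 H2).
    destruct Heta as [E|E]; subst eta; lia.
Qed.

End Main.

Lemma negcount_sum : forall (f : nat -> Z) n L s, (1 <= n + s)%nat ->
  (forall m, (1 <= m)%nat -> f m = 1%Z \/ f m = (-1)%Z) ->
  (2 * Z.of_nat (length (filter (fun m => Z.eqb (f (n + m)%nat) (-1)%Z) (seq s L)))
    = Z.of_nat L - sumf f (n+s) L)%Z.
Proof.
  intros f n L. induction L; intros s Hs Hv; cbn [seq filter length sumf]. lia.
  replace (S (n+s)) with (n + S s)%nat by lia.
  pose proof (IHL (S s) ltac:(lia) Hv).
  destruct (Hv (n+s)%nat Hs) as [E|E]; rewrite E.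
  - replace (1 =? -1)%Z with false by reflexivity. lia.
  - replace (-1 =? -1)%Z with true by reflexivity. cbn [length]. rewrite Nat2Z.inj_succ. lia.
Qed.

Lemma mod_char_props : forall eta f, (eta = 1%Z \/ eta = (-1)%Z) ->
  is_modified_char 3 chi3 (fun _ => eta) f ->
  (forall m, (1 <= m)%nat -> (m mod 3 <> 0)%nat -> f m = chi3 m) /\
  (forall j, (1 <= j)%nat -> f (3*j)%nat = (eta * f j)%Z).
Proof.
  intros eta f He [_ [Hv [Hm [Hp Hq]]]]. split.
  - intros m. induction m as [m IH] using lt_wf_ind. intros H1 H3.
    destruct (Nat.eq_dec m 1) as [->|Hm1].
    + assert (f 1%nat = f 1%nat * f 1%nat)%Z by (rewrite <- Hm; auto).
      destruct (Hv 1%nat) as [E|E]; auto; rewrite E in *; simpl; lia.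
    + destruct (prime_dec (Z.of_nat m)) as [Pr|NPr].
      * apply Hp; auto. intros [z Hz]. dv m. destruct z as [|[|[|z]]]; lia.
      * destruct (not_prime_divide (Z.of_nat m) ltac:(lia) NPr) as [d [Hd [z Hz]]].
        assert (Hz0 : (0 <= z)%Z) by nia.
        set (a := Z.to_nat d). set (b := Z.to_nat z).
        assert (Eab : m = (b * a)%nat).
        { apply Nat2Z.inj. rewrite Nat2Z.inj_mul. unfold a, b. rewrite !Z2Nat.id; lia. }
        assert (1 < a < m)%nat by (unfold a; lia).
        assert (1 < b < m)%nat by (subst m; nia).
        assert (a mod 3 <> 0)%nat.
        { intro E. apply H3. rewrite Eab, Nat.mul_mod, E by lia. rewrite Nat.mul_0_r. reflexivity. }
        assert (b mod 3 <> 0)%nat.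
        { intro E. apply H3. rewrite Eab, Nat.mul_mod, E by lia. reflexivity. }
        rewrite Eab, Hm, chi3_mul by lia. rewrite (IH a), (IH b) by lia. reflexivity.
  - intros j Hj. rewrite Hm by lia. f_equal. apply Hq. exact prime_3. exists 1%nat. lia.
Qed.

Lemma part1 : forall (eta : Z) (f : nat -> Z),
     (eta = 1%Z \/ eta = (-1)%Z) ->
     is_modified_char 3 chi3 (fun _ => eta) f ->
     forall k n : nat, (1 <= k)%nat ->
       INR (negcount f k n) >=
         / 2 * (INR k - IZR (floor (ln (INR k) / ln 3)) - 2).
Proof.
  intros eta f He Hmc k n Hk.
  destruct (mod_char_props eta f He Hmc) as [H1 H3].
  assert (Hv : forall m, (1 <= m)%nat -> f m = 1%Z \/ f m = (-1)%Z).
  { destruct Hmc as [_ [Hv _]]. intros; apply Hv; lia. }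
  assert (Hl3 : 0 < ln 3) by (rewrite <- ln_1; apply ln_increasing; lra).
  assert (Hk1 : 1 <= INR k) by (apply (le_INR 1); lia).
  assert (Hlk : 0 <= ln (INR k)) by (rewrite <- ln_1; apply ln_le; lra).
  unfold floor. destruct (floor_ex (ln (INR k) / ln 3)) as [e [He1 He2]]. simpl.
  assert (He0 : (0 <= e)%Z).
  {
    assert (0 <= ln (INR k) / ln 3) by (apply Rdiv_le_0_compat; lra).
    assert (IZR (-1) < IZR e) by lra. apply lt_IZR in H0. lia. }
  set (b := Z.to_nat (e+1)).
  assert (Hb : INR b = IZR e + 1).
  { unfold b. rewrite INR_IZR_INZ, Z2Nat.id by lia. rewrite plus_IZR. reflexivity. }
  assert (Hkb : (k <= 3^b)%nat).
  { apply Nat.lt_le_incl. apply INR_lt. rewrite pow_INR.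
    apply ln_lt_inv. lra. apply pow_lt; simpl; lra.
    rewrite ln_pow by (simpl; lra). rewrite Hb. simpl INR.
    replace (1+1+1) with 3 by ring.
    apply Rmult_lt_compat_r with (r := ln 3) in He2; auto.
    unfold Rdiv in He2. rewrite Rmult_assoc, Rinv_l, Rmult_1_r in He2 by lra. lra. }
  pose proof (bound3 f eta He H1 H3 Hv b k (n+1) ltac:(lia) Hkb) as Hbd.
  pose proof (negcount_sum f n k 1 ltac:(lia) Hv) as Hn.
  fold (negcount f k n) in Hn.
  assert (Hz : (Z.of_nat k - e - 2 <= 2 * Z.of_nat (negcount f k n))%Z).
  { unfold b in Hbd. rewrite Z2Nat.id in Hbd by lia. lia. }
  apply IZR_le in Hz. rewrite minus_IZR, minus_IZR, mult_IZR in Hz.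
  rewrite <- !INR_IZR_INZ in Hz. simpl in Hz. lra.
Qed.

Fixpoint g3 (fuel n : nat) : Z :=
  match fuel with
  | O => 1%Z
  | S fu => if (n mod 3 =? 0)%nat then g3 fu (n/3) else chi3 n
  end.
Definition f3 (n : nat) : Z := g3 n n.

Lemma g3_S : forall fu n, g3 (S fu) n = if (n mod 3 =? 0)%nat then g3 fu (n/3) else chi3 n.
Proof. reflexivity. Qed.

Lemma g3_fuel : forall fu fu' n, (1 <= n <= fu)%nat -> (n <= fu')%nat -> g3 fu n = g3 fu' n.
Proof.
  induction fu; intros fu' n Hn Hn'. lia.
  destruct fu' as [|fu']. lia. rewrite !g3_S.
  destruct (n mod 3 =? 0)%nat eqn:E; auto.
  apply Nat.eqb_eq in E. dv n. apply IHfu; lia.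
Qed.

Lemma f3_eq : forall n, (1 <= n)%nat ->
  f3 n = if (n mod 3 =? 0)%nat then f3 (n/3) else chi3 n.
Proof.
  intros n Hn. unfold f3. destruct n as [|n']. lia. rewrite g3_S.
  destruct (S n' mod 3 =? 0)%nat eqn:E; auto.
  apply Nat.eqb_eq in E. dv (S n'). apply g3_fuel; lia.
Qed.

Lemma f3_vals : forall n, (1 <= n)%nat -> f3 n = 1%Z \/ f3 n = (-1)%Z.
Proof.
  intros n. induction n as [n IH] using lt_wf_ind. intros Hn.
  rewrite f3_eq by auto. destruct (n mod 3 =? 0)%nat eqn:E.
  - apply Nat.eqb_eq in E. dv n. apply IH; lia.
  - apply Nat.eqb_neq in E. apply chi3_vals; auto.
Qed.

Lemma f3_mul : forall N m n, (m + n <= N)%nat -> (0 < m)%nat -> (0 < n)%nat ->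
  f3 (m*n) = (f3 m * f3 n)%Z.
Proof.
  induction N; intros m n HN Hm Hn. lia.
  destruct (Nat.eq_dec (m mod 3) 0) as [Em|Em].
  - dv m. set (t := (m/3)%nat) in *.
    assert (Hmt : m = (3*t)%nat) by lia.
    rewrite (f3_eq (m*n)) by nia.
    assert (E1 : ((m*n) mod 3 =? 0)%nat = true).
    { apply Nat.eqb_eq. replace (m*n)%nat with ((t*n)*3)%nat by lia. apply Nat.Div0.mod_mul. }
    rewrite E1.
    replace ((m*n)/3)%nat with (t*n)%nat by (replace (m*n)%nat with ((t*n)*3)%nat by lia; rewrite Nat.div_mul by lia; reflexivity).
    rewrite (f3_eq m) by lia. rewrite (proj2 (Nat.eqb_eq _ _) Em).
    apply IHN; lia.
  - destruct (Nat.eq_dec (n mod 3) 0) as [En|En].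
    + dv n. set (t := (n/3)%nat) in *.
      assert (Hnt : n = (3*t)%nat) by lia.
      rewrite (f3_eq (m*n)) by nia.
      assert (E1 : ((m*n) mod 3 =? 0)%nat = true).
      { apply Nat.eqb_eq. replace (m*n)%nat with ((m*t)*3)%nat by lia. apply Nat.Div0.mod_mul. }
      rewrite E1.
      replace ((m*n)/3)%nat with (m*t)%nat by (replace (m*n)%nat with ((m*t)*3)%nat by lia; rewrite Nat.div_mul by lia; reflexivity).
      rewrite (f3_eq n) by lia. rewrite (proj2 (Nat.eqb_eq _ _) En).
      apply IHN; lia.
    + assert (E1 : ((m*n) mod 3 <> 0)%nat).
      { rewrite Nat.Div0.mul_mod. dv m. dv n.
        destruct (m mod 3)%nat as [|[|[|]]]; destruct (n mod 3)%nat as [|[|[|]]]; simpl; lia. }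
      rewrite (f3_eq (m*n)) by nia. rewrite (f3_eq m) by lia. rewrite (f3_eq n) by lia.
      rewrite (proj2 (Nat.eqb_neq _ _) E1), (proj2 (Nat.eqb_neq _ _) Em), (proj2 (Nat.eqb_neq _ _) En).
      apply chi3_mul.
Qed.

Lemma real_char3 : is_real_char 3 chi3.
Proof.
  split; [reflexivity|]. split; [apply chi3_mul|]. split.
  { intros n. unfold chi3. replace (n+3)%nat with (n + 1*3)%nat by lia.
    rewrite Nat.Div0.mod_add. reflexivity. }
  split.
  { intros n. unfold chi3. destruct (n mod 3)%nat as [|[|]]; auto. }
  intros n. rewrite Nat.gcd_comm, <- (Nat.gcd_mod n 3) by lia. rewrite Nat.gcd_comm.
  unfold chi3. dv n. destruct (n mod 3)%nat as [|[|[|]]]; simpl; split; intro; try lia; try congruence.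
Qed.

Lemma prime3_nat : forall p, prime (Z.of_nat p) -> Nat.divide 3 p -> p = 3%nat.
Proof.
  intros p Hp [z Hz].
  assert (H : (3 | Z.of_nat p)%Z) by (exists (Z.of_nat z); lia).
  destruct (prime_divisors _ Hp _ H) as [E|[E|[E|E]]]; lia.
Qed.

Lemma mod_char3 : is_modified_char 3 chi3 (fun _ => 1%Z) f3.
Proof.
  split; [auto|]. split; [intros; apply f3_vals; lia|]. split.
  { intros m n Hm Hn. apply (f3_mul (m+n)); lia. }
  assert (Hp2 : forall p, prime (Z.of_nat p) -> (2 <= p)%nat).
  { intros p Hp. destruct Hp as [Hp _]. lia. }
  split.
  - intros p Hp Hnd. specialize (Hp2 p Hp). rewrite f3_eq by lia.
    destruct (p mod 3 =? 0)%nat eqn:E.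
    + exfalso. apply Nat.eqb_eq in E. apply Nat.Lcm0.mod_divide in E.
      apply prime3_nat in E; auto. subst. apply Hnd. exists 1%nat. lia.
    + reflexivity.
  - intros p Hp Hd. specialize (Hp2 p Hp). destruct Hd as [z Hz].
    assert (p = 3%nat) by (destruct z as [|[|]]; nia). subst.
    reflexivity.
Qed.

Lemma part2 : exists (C : R) (K0 : nat), forall k : nat, (K0 <= k)%nat ->
     Rbar_le (Finite (INR k / 2 - C * ln (INR k))) (delta k).
Proof.
  assert (Hl3 : 0 < ln 3) by (rewrite <- ln_1; apply ln_increasing; lra).
  exists (3 / (2 * ln 3)), 3%nat. intros k Hk.
  assert (Hk3 : 3 <= INR k) by (replace 3 with (INR 3) by (simpl; lra); apply le_INR; lia).
  assert (Hlk : ln 3 <= ln (INR k)) by (apply ln_le; lra).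
  set (L := INR k / 2 - 3 / (2 * ln 3) * ln (INR k)).
  assert (Hlow : forall n, L <= INR (negcount f3 k n)).
  { intros n. pose proof (part1 1%Z f3 (or_introl eq_refl) mod_char3 k n ltac:(lia)) as H.
    unfold floor in H. destruct (floor_ex (ln (INR k) / ln 3)) as [e [He1 He2]]. simpl in H.
    unfold L. assert (1 <= ln (INR k) / ln 3).
    { apply (Rmult_le_reg_r (ln 3)); auto. unfold Rdiv. rewrite Rmult_assoc, Rinv_l by lra. lra. }
    replace (3 / (2 * ln 3) * ln (INR k)) with (3/2 * (ln (INR k) / ln 3)) by (field; lra).
    lra. }
  set (E := fun y => exists n : nat, y = INR (negcount f3 k n)).
  destruct (Glb_Rbar_correct E) as [Hlb Hgr].
  assert (H1 : Rbar_le (Finite L) (Glb_Rbar E)).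
  { apply Hgr. intros y [n ->]. simpl. apply Hlow. }
  assert (H2 : Rbar_le (Glb_Rbar E) (Finite (INR (negcount f3 k 0)))).
  { apply Hlb. exists 0%nat. reflexivity. }
  destruct (Glb_Rbar E) as [x| |] eqn:Eg; simpl in H1, H2; try contradiction.
  apply Rbar_le_trans with (Finite x); [exact H1|].
  destruct (Lub_Rbar_correct (fun x => exists (q : nat) (chi eta f : nat -> Z),
    (1 < q)%nat /\ is_real_char q chi /\ is_modified_char q chi eta f /\
    Finite x = minneg f k)) as [Hub _].
  apply Hub. exists 3%nat, chi3, (fun _ => 1%Z), f3.
  split; [lia|]. split; [exact real_char3|]. split; [exact mod_char3|].
  unfold minneg. fold E. rewrite Eg. reflexivity.
Qed.

Theorem mainTheorem3 :
  (forall (eta : Z) (f : nat -> Z),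
     (eta = 1%Z \/ eta = (-1)%Z) ->
     is_modified_char 3 chi3 (fun _ => eta) f ->
     forall k n : nat, (1 <= k)%nat ->
       INR (negcount f k n) >=
         / 2 * (INR k - IZR (floor (ln (INR k) / ln 3)) - 2)) /\
  (exists (C : R) (K0 : nat), forall k : nat, (K0 <= k)%nat ->
     Rbar_le (Finite (INR k / 2 - C * ln (INR k))) (delta k)).
Proof. split; [exact part1 | exact part2]. Qed.
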